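(* For every positive integer $n$ there exist a line $\ell$ in $\mathbb{R}^3$ and a finite family of convex polytopes in $\mathbb{R}^3$ of size at least $n$ that is a minimal pinning of $\ell$.
   Context: A line $\ell$ is a transversal to a family $\mathcal{F}$ of convex polytopes if it intersects every member of $\mathcal{F}$. $\mathcal{F}$ pins $\ell$ if $\ell$ is a transversal to $\mathcal{F}$ and $\ell$ is an isolated point of the space of line transversals to $\mathcal{F}$ (in the space of lines with its usual topology). $\mathcal{F}$ is a minimal pinning of $\ell$ if it pins $\ell$ and no proper subfamily of $\mathcal{F}$ pins $\ell$. (The polytopes are allowed to intersect each other and to have facets coplanar with $\ell$.) *)

(* Defs.v *)
From Stdlib Require Import Reals List.
Import ListNotations.
Open Scope R_scope.

Definition point : Type := (R * R * R)%type.

Definition padd (x y : point) : point :=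
  let '(x1, x2, x3) := x in let '(y1, y2, y3) := y in (x1 + y1, x2 + y2, x3 + y3).
Definition pscale (t : R) (x : point) : point :=
  let '(x1, x2, x3) := x in (t * x1, t * x2, t * x3).
Definition pzero : point := (0, 0, 0).

(* sup-norm distance between points (induces the usual topology of R^3) *)
Definition pclose (eps : R) (x y : point) : Prop :=
  let '(x1, x2, x3) := x in let '(y1, y2, y3) := y in
  Rabs (x1 - y1) < eps /\ Rabs (x2 - y2) < eps /\ Rabs (x3 - y3) < eps.

Definition conv_comb (ws : list R) (vs : list point) : point :=
  fold_right (fun wv acc => padd (pscale (fst wv) (snd wv)) acc) pzero (combine ws vs).

Definition conv_hull (vs : list point) (x : point) : Prop :=
  exists ws : list R,
    length ws = length vs /\ Forall (fun w => 0 <= w) ws /\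
    fold_right Rplus 0 ws = 1 /\ x = conv_comb ws vs.

Definition convex_polytope (P : point -> Prop) : Prop :=
  exists vs : list point, vs <> [] /\ forall x, P x <-> conv_hull vs x.

Definition line_pts (p d : point) (x : point) : Prop :=
  exists t : R, x = padd p (pscale t d).

(* A line is represented by a pair (p, d) with d <> 0; two representatives
   denote the same line iff they have the same point set. *)
Definition is_line (p d : point) : Prop := d <> pzero.

Definition same_line (p d p' d' : point) : Prop :=
  forall x, line_pts p d x <-> line_pts p' d' x.

Definition transversal (S : nat -> Prop) (P : nat -> point -> Prop) (p d : point) : Prop :=
  forall i, S i -> exists x, line_pts p d x /\ P i x.

(* The space of lines carries the
   quotient topology of {(p,d) | d <> 0} (an open quotient map), so isolation
   means: some neighbourhood of the representative (p,d) contains only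
   representatives of transversal lines equal to the given line. *)
Definition pins (S : nat -> Prop) (P : nat -> point -> Prop) (p d : point) : Prop :=
  transversal S P p d /\
  exists eps : R, 0 < eps /\
    forall p' d', is_line p' d' -> pclose eps p p' -> pclose eps d d' ->
      transversal S P p' d' -> same_line p d p' d'.

Definition minimal_pinning (m : nat) (P : nat -> point -> Prop) (p d : point) : Prop :=
  pins (fun i => (i < m)%nat) P p d /\
  forall S : nat -> Prop,
    (forall i, S i -> (i < m)%nat) -> (exists i, (i < m)%nat /\ ~ S i) ->
    ~ pins S P p d.

(* Main.v *)
Require Import Defs.
From Stdlib Require Import Reals List Lra Lia Psatz.
Import ListNotations.
Open Scope R_scope.

Definition lin (k1 k2 k3 : R) (x : point) : R :=
  let '(x1,x2,x3) := x in k1*x1+k2*x2+k3*x3.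

Lemma pt_eq (a b c a' b' c' : R) : a = a' -> b = b' -> c = c' -> (a,b,c) = (a',b',c').
Proof. intros; subst; reflexivity. Qed.

Lemma lin_conv k1 k2 k3 c vs : forall ws, length ws = length vs ->
  Forall (fun w => 0 <= w) ws ->
  (forall v, In v vs -> c <= lin k1 k2 k3 v) ->
  c * fold_right Rplus 0 ws <= lin k1 k2 k3 (conv_comb ws vs).
Proof.
  induction vs as [|v vs IH]; intros ws Hl Hf Hv; destruct ws as [|w ws];
    simpl in Hl; try discriminate.
  - unfold conv_comb; simpl; unfold pzero, lin. lra.
  - inversion Hf; subst. injection Hl as Hl.
    assert (IH' := IH ws Hl H2 (fun v' Hv' => Hv v' (or_intror Hv'))).
    assert (Hv0 := Hv v (or_introl eq_refl)).
    change (conv_comb (w::ws) (v::vs)) with (padd (pscale w v) (conv_comb ws vs)).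
    fold (conv_comb ws vs) in *.
    destruct v as [[v1 v2] v3]. destruct (conv_comb ws vs) as [[r1 r2] r3].
    simpl in *. 
    assert (w * c <= w * (k1*v1+k2*v2+k3*v3)) by (apply Rmult_le_compat_l; lra).
    nra.
Qed.

Lemma conv_ge k1 k2 k3 c vs x : conv_hull vs x ->
  (forall v, In v vs -> c <= lin k1 k2 k3 v) -> c <= lin k1 k2 k3 x.
Proof.
  intros [ws [Hl [Hf [Hs Hx]]]] Hv. subst x.
  pose proof (lin_conv k1 k2 k3 c vs ws Hl Hf Hv). rewrite Hs in H. lra.
Qed.

Definition prism (a b n1 n2 : R) : list point :=
  [(1/2,0,0); (a,-n2,n1); (a,n2,-n1); (a,n1,n2); (b,-n2,n1); (b,n2,-n1); (b,n1,n2)].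

Lemma prism_fwd a b n1 n2 x1 x2 x3 : a <= 1/2 <= b ->
  conv_hull (prism a b n1 n2) (x1,x2,x3) -> a <= x1 <= b /\ 0 <= n1*x2+n2*x3.
Proof.
  intros Hab H.
  pose proof (conv_ge 1 0 0 a _ _ H) as H1.
  pose proof (conv_ge (-1) 0 0 (-b) _ _ H) as H2.
  pose proof (conv_ge 0 n1 n2 0 _ _ H) as H3.
  simpl in H1, H2, H3.
  assert (a <= x1).
  { enough (a <= 1*x1+0*x2+0*x3) by lra. apply H1.
    intros v Hv; simpl in Hv; repeat destruct Hv as [<-|Hv]; simpl; try lra; contradiction. }
  assert (-b <= -1*x1+0*x2+0*x3).
  { apply H2.
    intros v Hv; simpl in Hv; repeat destruct Hv as [<-|Hv]; simpl; try lra; contradiction. }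
  assert (0 <= 0*x1+n1*x2+n2*x3).
  { apply H3.
    intros v Hv; simpl in Hv; repeat destruct Hv as [<-|Hv]; simpl; try nra; contradiction. }
  split; lra.
Qed.

Definition small (n : R) := n <= n*n /\ -n <= n*n.

Lemma small_mul n w : small n -> -1/4 <= w <= 1/4 -> -(n*n)/4 <= n*w <= n*n/4.
Proof. intros [h1 h2] hw. destruct (Rle_dec 0 n); split; nra. Qed.

Lemma prism_mem a b n1 n2 t w1 w2 : (t = a \/ t = b) ->
  0 < n1*n1+n2*n2 -> small n1 -> small n2 -> -1/4 <= w1 <= 1/4 -> -1/4 <= w2 <= 1/4 ->
  0 <= n1*w1+n2*w2 -> conv_hull (prism a b n1 n2) (t, w1, w2).
Proof.
  intros Ht HN s1 s2 hw1 hw2 hg.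
  pose proof (small_mul n1 w1 s1 hw1). pose proof (small_mul n1 w2 s1 hw2).
  pose proof (small_mul n2 w1 s2 hw1). pose proof (small_mul n2 w2 s2 hw2).
  remember (n1*n1+n2*n2) as N2 eqn:EN2.
  assert (HiN : 0 < / N2) by (apply Rinv_0_lt_compat; lra).
  set (l3 := (n1*w1+n2*w2) * / N2).
  set (l1 := (N2 - (n1 * w1 + n2 * w2) + (- n2 * w1 + n1 * w2)) * /N2 * /2).
  set (l2 := (N2 - (n1 * w1 + n2 * w2) - (- n2 * w1 + n1 * w2)) * /N2 * /2).
  assert (Hl3 : 0 <= l3) by (unfold l3; apply Rmult_le_pos; lra).
  assert (Hl1 : 0 <= l1) by (unfold l1; apply Rmult_le_pos; [apply Rmult_le_pos|]; lra).
  assert (Hl2 : 0 <= l2) by (unfold l2; apply Rmult_le_pos; [apply Rmult_le_pos|]; lra).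
  destruct Ht as [-> | ->].
  - exists [0;l1;l2;l3;0;0;0]. split; [reflexivity|]. split.
    { repeat (apply Forall_cons; [lra|]); apply Forall_nil. }
    split.
    { simpl. unfold l1, l2, l3. field. lra. }
    unfold conv_comb. simpl. apply pt_eq; subst N2; unfold l1, l2, l3; field; lra.
  - exists [0;0;0;0;l1;l2;l3]. split; [reflexivity|]. split.
    { repeat (apply Forall_cons; [lra|]); apply Forall_nil. }
    split.
    { simpl. unfold l1, l2, l3. field. lra. }
    unfold conv_comb. simpl. apply pt_eq; subst N2; unfold l1, l2, l3; field; lra.
Qed.

Definition S1 : list point := [(0,0,-1); (0,0,1)].
Definition S2 : list point := [(1,-1,0); (1,1,0)].

Lemma S1_fwd x1 x2 x3 : conv_hull S1 (x1,x2,x3) -> x1 = 0 /\ x2 = 0.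
Proof.
  intros H.
  pose proof (conv_ge 1 0 0 0 _ _ H) as H1.
  pose proof (conv_ge (-1) 0 0 0 _ _ H) as H2.
  pose proof (conv_ge 0 1 0 0 _ _ H) as H3.
  pose proof (conv_ge 0 (-1) 0 0 _ _ H) as H4.
  simpl in *.
  assert (forall k1 k2, (forall v, In v S1 -> 0 <= lin k1 k2 0 v)).
  { intros k1 k2 v Hv; simpl in Hv; repeat destruct Hv as [<-|Hv]; simpl; try lra; contradiction. }
  specialize (H1 (H0 _ _)). specialize (H2 (H0 _ _)). specialize (H3 (H0 _ _)). specialize (H4 (H0 _ _)).
  split; lra.
Qed.

Lemma S2_fwd x1 x2 x3 : conv_hull S2 (x1,x2,x3) -> x1 = 1 /\ x3 = 0.
Proof.
  intros H.
  pose proof (conv_ge 1 0 0 1 _ _ H) as H1.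
  pose proof (conv_ge (-1) 0 0 (-1) _ _ H) as H2.
  pose proof (conv_ge 0 0 1 0 _ _ H) as H3.
  pose proof (conv_ge 0 0 (-1) 0 _ _ H) as H4.
  simpl in *.
  assert (A1 : 1 <= 1*x1+0*x2+0*x3) by (apply H1; intros v Hv; simpl in Hv; repeat destruct Hv as [<-|Hv]; simpl; try lra; contradiction).
  assert (A2 : -1 <= -1*x1+0*x2+0*x3) by (apply H2; intros v Hv; simpl in Hv; repeat destruct Hv as [<-|Hv]; simpl; try lra; contradiction).
  assert (A3 : 0 <= 0*x1+0*x2+1*x3) by (apply H3; intros v Hv; simpl in Hv; repeat destruct Hv as [<-|Hv]; simpl; try lra; contradiction).
  assert (A4 : 0 <= 0*x1+0*x2+ -1*x3) by (apply H4; intros v Hv; simpl in Hv; repeat destruct Hv as [<-|Hv]; simpl; try lra; contradiction).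
  split; lra.
Qed.

Lemma S1_mem z : -1 <= z <= 1 -> conv_hull S1 (0,0,z).
Proof.
  intros Hz. exists [(1-z)/2; (1+z)/2]. split; [reflexivity|]. split.
  { repeat (apply Forall_cons; [lra|]); apply Forall_nil. }
  split. { simpl. field. }
  unfold conv_comb; simpl; apply pt_eq; field.
Qed.

Lemma S2_mem y : -1 <= y <= 1 -> conv_hull S2 (1,y,0).
Proof.
  intros Hz. exists [(1-y)/2; (1+y)/2]. split; [reflexivity|]. split.
  { repeat (apply Forall_cons; [lra|]); apply Forall_nil. }
  split. { simpl. field. }
  unfold conv_comb; simpl; apply pt_eq; field.
Qed.

Lemma prism_mid a b n1 n2 : conv_hull (prism a b n1 n2) (1/2,0,0).
Proof.
  exists [1;0;0;0;0;0;0]. split; [reflexivity|]. split.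
  { repeat (apply Forall_cons; [lra|]); apply Forall_nil. }
  split. { simpl. ring. }
  unfold conv_comb; simpl; apply pt_eq; ring.
Qed.

Definition pa (j : nat) : R := match j with 2%nat => 0 | 3%nat | 4%nat => 1/2 | _ => -1 end.
Definition pb (j : nat) : R := match j with 2%nat | 3%nat | 4%nat => 1/2 | _ => 2 end.
Definition pn1 (N j : nat) : R :=
  match j with 2%nat => 2^N | 3%nat => 1 | 4%nat => -2 | S (S (S (S (S k)))) => -(2^(S k)) | _ => 0 end.
Definition pn2 (j : nat) : R := match j with 2%nat => 1 | 3%nat => 0 | 4%nat => -1 | _ => 1 end.

Definition verts (N j : nat) : list point :=
  match j with 0%nat => S1 | 1%nat => S2 | _ => prism (pa j) (pb j) (pn1 N j) (pn2 j) end.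

Lemma verts_ge2 N j : (2 <= j)%nat -> verts N j = prism (pa j) (pb j) (pn1 N j) (pn2 j).
Proof. intros H. destruct j as [|[|j]]; [lia|lia|reflexivity]. Qed.

Lemma pow2_ge1 k : 1 <= 2^k.
Proof. apply pow_R1_Rle. lra. Qed.

Lemma params_ok N j : (2 <= j)%nat ->
  -1 <= pa j /\ pa j <= 1/2 /\ 1/2 <= pb j /\ pb j <= 2 /\
  0 < pn1 N j * pn1 N j + pn2 j * pn2 j /\ small (pn1 N j) /\ small (pn2 j).
Proof.
  intros H. unfold small.
  destruct j as [|[|[|[|[|k]]]]]; try lia; simpl pa; simpl pb; simpl pn2;
   try (unfold pn1; lra).
  - unfold pn1. pose proof (pow2_ge1 N). repeat split; nra.
  - unfold pn1. pose proof (pow2_ge1 (S k)). repeat split; nra.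
Qed.

Definition gV (N j : nat) (c e t : R) := pn1 N j * (c*t) + pn2 j * (e*(t-1)).

Lemma hitV N j c e : (2 <= j)%nat -> -1/16 <= c <= 1/16 -> -1/16 <= e <= 1/16 ->
  (0 <= gV N j c e (pa j) \/ 0 <= gV N j c e (pb j)) ->
  exists x, line_pts (0,0,-e) (1,c,e) x /\ conv_hull (verts N j) x.
Proof.
  intros Hj Hc He Hg. rewrite verts_ge2 by exact Hj.
  destruct (params_ok N j Hj) as (h1&h2&h3&h4&h5&h6&h7).
  unfold gV in Hg.
  destruct Hg as [Hg|Hg].
  - exists (pa j, c * pa j, e * (pa j - 1)). split.
    + exists (pa j). simpl. apply pt_eq; ring.
    + apply prism_mem; auto; try nra.
  - exists (pb j, c * pb j, e * (pb j - 1)). split.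
    + exists (pb j). simpl. apply pt_eq; ring.
    + apply prism_mem; auto; try nra.
Qed.

Lemma hitV0 N c e : -1 <= e <= 1 -> exists x, line_pts (0,0,-e) (1,c,e) x /\ conv_hull (verts N 0) x.
Proof.
  intros. exists (0,0,-e). split.
  - exists 0. simpl. apply pt_eq; ring.
  - apply S1_mem. lra.
Qed.

Lemma hitV1 N c e : -1 <= c <= 1 -> exists x, line_pts (0,0,-e) (1,c,e) x /\ conv_hull (verts N 1) x.
Proof.
  intros. exists (1,c,0). split.
  - exists 1. simpl. apply pt_eq; ring.
  - apply S2_mem. lra.
Qed.

Lemma hit_mid N j p d : (2 <= j)%nat -> line_pts p d (1/2,0,0) ->
  exists x, line_pts p d x /\ conv_hull (verts N j) x.
Proof.
  intros Hj H. exists (1/2,0,0). split; auto. rewrite verts_ge2 by exact Hj. apply prism_mid.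
Qed.

Lemma line_coord p1 p2 p3 d1 d2 d3 x1 x2 x3 : d1 <> 0 ->
  line_pts (p1,p2,p3) (d1,d2,d3) (x1,x2,x3) ->
  x2 = p2 + (x1 - p1) * (d2/d1) /\ x3 = p3 + (x1-p1)*(d3/d1).
Proof.
  intros Hd [t Ht]. simpl in Ht. injection Ht as E1 E2 E3. subst. split; field; auto.
Qed.

Lemma prism_line N j p1 p2 p3 d1 d2 d3 : d1 <> 0 -> (2 <= j)%nat ->
  p2 + (0 - p1)*(d2/d1) = 0 -> p3 + (1-p1)*(d3/d1) = 0 ->
  (exists x, line_pts (p1,p2,p3) (d1,d2,d3) x /\ conv_hull (verts N j) x) ->
  exists t, pa j <= t <= pb j /\ 0 <= gV N j (d2/d1) (d3/d1) t.
Proof.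
  intros Hd Hj E1 E2 [[[x1 x2] x3] [Hl Hc]].
  rewrite verts_ge2 in Hc by exact Hj.
  destruct (params_ok N j Hj) as (h1&h2&h3&h4&h5&h6&h7).
  destruct (prism_fwd _ _ _ _ _ _ _ (conj h2 h3) Hc) as [Ht Hg].
  destruct (line_coord _ _ _ _ _ _ _ _ _ Hd Hl) as [F2 F3].
  exists x1. split; auto. unfold gV.
  set (c := d2/d1) in *. set (e := d3/d1) in *. clearbody c e.
  subst x2 x3. assert (Q1 : c * x1 = p2 + (x1 - p1) * c) by nra.
  assert (Q2 : e * (x1 - 1) = p3 + (x1 - p1) * e) by nra. rewrite Q1, Q2. exact Hg.
Qed.

Lemma findk N c e : 0 < c -> 2*c <= e <= 2^(S N) * c ->
  exists j, (j <= N)%nat /\ 2^j * c < e < 2^(S (S j)) * c.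
Proof.
  induction N as [|N IH]; intros Hc He.
  - exists 0%nat. simpl in *. split; [lia|]. split; nra.
  - destruct (Rle_dec e (2^(S N) * c)) as [Hle|Hgt].
    + destruct (IH Hc (conj (proj1 He) Hle)) as [j [Hj Hj2]]. exists j. split; [lia|exact Hj2].
    + exists (S N). split; [lia|]. split; [lra|]. 
      assert (0 < 2^(S (S N))) by (apply pow_lt; lra).
      simpl in *. nra.
Qed.

Lemma cover n c e : (1 <= n)%nat ->
  (forall j, (2 <= j)%nat -> (j < n+5)%nat -> exists t, pa j <= t <= pb j /\ 0 <= gV n j c e t) ->
  c = 0 /\ e = 0.
Proof.
  intros Hn H.
  destruct (H 3%nat ltac:(lia) ltac:(lia)) as [t3 [Ht3 G3]].
  destruct (H 4%nat ltac:(lia) ltac:(lia)) as [t4 [Ht4 G4]].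
  destruct (H 2%nat ltac:(lia) ltac:(lia)) as [t2 [Ht2 G2]].
  unfold gV, pa, pb, pn1, pn2 in *.
  assert (t3 = 1/2) by lra. assert (t4 = 1/2) by lra. subst t3 t4.
  assert (Hc : 0 <= c) by lra.
  assert (He : 2*c <= e) by lra.
  pose proof (pow2_ge1 n) as P.
  assert (HX : e <= 2^n * c).
  { destruct (Rle_dec e (2^n*c)) as [h|h]; auto. apply Rnot_le_lt in h. exfalso.
    assert (0 <= 2^n*c) by nra.
    nra. }
  destruct (Rle_lt_or_eq_dec 0 c Hc) as [Hc'|Hc'].
  - exfalso. destruct n as [|N]; [lia|].
    destruct (findk N c e Hc' (conj He HX)) as [k [Hk [L U]]].
    destruct (H (5+k)%nat ltac:(lia) ltac:(lia)) as [t [Ht G]].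
    simpl in Ht, G. simpl in L, U.
    set (K := 2^k) in *. 
    assert (0 <= (2 - t) * (e - K*c)) by nra.
    assert (0 <= (t + 1) * (4*K*c - e)) by nra.
    nra.
  - subst c. split; [reflexivity|]. lra.
Qed.

Definition goodV n i0 c e := forall j, (2 <= j)%nat -> (j < n+5)%nat -> j <> i0 ->
  0 <= gV n j c e (pa j) \/ 0 <= gV n j c e (pb j).

Lemma not_pins_V n (S : nat -> Prop) i0 c e eps :
  (forall i, S i -> (i < n+5)%nat /\ i <> i0) ->
  -1/16 <= c <= 1/16 -> -1/16 <= e <= 1/16 -> (c <> 0 \/ e <> 0) ->
  goodV n i0 c e -> Rabs c < eps -> Rabs e < eps ->
  ~ (forall p' d', is_line p' d' -> pclose eps (0,0,0) p' -> pclose eps (1,0,0) d' ->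
       transversal S (fun i => conv_hull (verts n i)) p' d' -> same_line (0,0,0) (1,0,0) p' d').
Proof.
  intros HS Hc He Hce Hg Hce1 Hce2 Hiso.
  assert (Heps : 0 < eps) by (pose proof (Rabs_pos c); lra).
  specialize (Hiso (0,0,-e) (1,c,e)).
  assert (Hsame : same_line (0,0,0) (1,0,0) (0,0,-e) (1,c,e)).
  { apply Hiso.
    - unfold is_line, pzero. intro H. injection H as H1 H2 H3. lra.
    - simpl. replace (0-0) with 0 by ring. replace (0 - -e) with e by ring. rewrite Rabs_R0. auto.
    - simpl. replace (1-1) with 0 by ring. replace (0-c) with (-c) by ring.
      replace (0-e) with (-e) by ring. rewrite Rabs_R0, !Rabs_Ropp. auto.
    - intros i Hi. destruct (HS i Hi) as [Hi1 Hi2].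
      destruct i as [|[|i]].
      + apply hitV0; lra.
      + apply hitV1; lra.
      + apply hitV; try lra; try lia. apply Hg; lia. }
  destruct (proj2 (Hsame (0,0,-e))) as [t1 Ht1]. { exists 0. simpl. apply pt_eq; ring. }
  destruct (proj2 (Hsame (1,c,0))) as [t2 Ht2]. { exists 1. simpl. apply pt_eq; ring. }
  simpl in Ht1, Ht2. injection Ht1 as A1 A2 A3. injection Ht2 as B1 B2 B3.
  destruct Hce; lra.
Qed.

Lemma goodX n : (1 <= n)%nat -> goodV n 2 0 1.
Proof.
  intros Hn j H2 H5 Hne. destruct j as [|[|[|[|[|k]]]]]; try lia; unfold gV; simpl.
  - left; lra.
  - left; lra.
  - right; lra.
Qed.

Lemma goodY n : (1 <= n)%nat -> goodV n 3 (-1) (-1).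
Proof.
  intros Hn j H2 H5 Hne. destruct j as [|[|[|[|[|k]]]]]; try lia; unfold gV; simpl.
  - left; lra.
  - left; lra.
  - right. pose proof (pow2_ge1 k). lra.
Qed.

Lemma goodZ n : (1 <= n)%nat -> goodV n 4 1 0.
Proof.
  intros Hn j H2 H5 Hne. destruct j as [|[|[|[|[|k]]]]]; try lia; unfold gV; simpl.
  - right. pose proof (pow2_ge1 n). lra.
  - left; lra.
  - left. pose proof (pow2_ge1 k). lra.
Qed.

Lemma goodV_scale n i0 c e l : 0 < l -> goodV n i0 c e -> goodV n i0 (l*c) (l*e).
Proof.
  intros Hl H j H2 H5 Hne. destruct (H j H2 H5 Hne) as [G|G]; unfold gV in *; [left|right];
  [replace (pn1 n j * (l * c * pa j) + pn2 j * (l * e * (pa j - 1))) with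
      (l * (pn1 n j * (c * pa j) + pn2 j * (e * (pa j - 1)))) by ring
  |replace (pn1 n j * (l * c * pb j) + pn2 j * (l * e * (pb j - 1))) with
      (l * (pn1 n j * (c * pb j) + pn2 j * (e * (pb j - 1)))) by ring];
  apply Rmult_le_pos; lra.
Qed.

Lemma goodC n k0 : (k0 < n)%nat -> goodV n (5+k0) 1 (2^(S k0)).
Proof.
  intros Hk j H2 H5 Hne. destruct j as [|[|[|[|[|k]]]]]; try lia; unfold gV;
    cbn [pa pb pn1 pn2].
  - right. assert (2^(S k0) <= 2^n) by (apply Rle_pow; [lra|lia]). lra.
  - left; lra.
  - left. assert (2^1 <= 2^(S k0)) by (apply Rle_pow; [lra|lia]). simpl in *. lra.
  - destruct (Nat.lt_trichotomy k k0) as [Hlt|Hgt].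
    + right. assert (2^(S (S k)) <= 2^(S k0)) by (apply Rle_pow; [lra|lia]).
      simpl in *. lra.
    + destruct Hgt as [Hgt|Hgt]; [lia|].
      left. assert (2^(S (S k0)) <= 2^(S k)) by (apply Rle_pow; [lra|lia]).
      simpl in *. lra.
Qed.

Theorem theorem3 :
  forall n : nat, (0 < n)%nat ->
  exists (p d : point) (m : nat) (P : nat -> point -> Prop),
    is_line p d /\
    (n <= m)%nat /\
    (forall i, (i < m)%nat -> convex_polytope (P i)) /\
    minimal_pinning m P p d.
Proof.
  intros n Hn.
  exists (0,0,0), (1,0,0), (n+5)%nat, (fun i => conv_hull (verts n i)).
  split. { unfold is_line, pzero. intro H. injection H; intros; lra. }
  split. { lia. }
  split.
  { intros i _. exists (verts n i). split.
    - destruct i as [|[|i]]; discriminate.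
    - intros; tauto. }
  split.
  - split.
    + intros i Hi. destruct i as [|[|i]].
      * exists (0,0,0). split. { exists 0. simpl. apply pt_eq; ring. }
        change (conv_hull S1 (0,0,0)). replace (0,0,0) with (0,0,-0) by (apply pt_eq; ring).
        apply S1_mem; lra.
      * exists (1,0,0). split. { exists 1. simpl. apply pt_eq; ring. }
        change (conv_hull S2 (1,0,0)). apply S2_mem; lra.
      * apply hit_mid. lia. exists (1/2). simpl. apply pt_eq; ring.
    + exists (1/2). split; [lra|].
      intros [[p1 p2] p3] [[d1 d2] d3] Hline Hp Hd Htr.
      simpl in Hd. destruct Hd as [D1 _]. apply Rabs_def2 in D1.
      assert (Hd1 : d1 <> 0) by lra.
      destruct (Htr 0%nat ltac:(cbv beta; lia)) as [[[x1 x2] x3] [L0 C0]].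
      change (conv_hull S1 (x1,x2,x3)) in C0. apply S1_fwd in C0 as [X1 X2].
      destruct (line_coord _ _ _ _ _ _ _ _ _ Hd1 L0) as [E1 _]. subst x1 x2.
      destruct (Htr 1%nat ltac:(cbv beta; lia)) as [[[y1 y2] y3] [L1 C1]].
      change (conv_hull S2 (y1,y2,y3)) in C1. apply S2_fwd in C1 as [Y1 Y3].
      destruct (line_coord _ _ _ _ _ _ _ _ _ Hd1 L1) as [_ E2]. subst y1 y3.
      destruct (cover n (d2/d1) (d3/d1)) as [Hc He]; [lia| |].
      { intros j H2 H5. apply prism_line with p1 p2 p3; auto; try lra. }
      assert (d2 = 0) by (replace d2 with (d2/d1*d1) by (field; auto); rewrite Hc; ring).
      assert (d3 = 0) by (replace d3 with (d3/d1*d1) by (field; auto); rewrite He; ring).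
      rewrite Hc in E1. rewrite He in E2.
      assert (p2 = 0) by lra. assert (p3 = 0) by lra. subst.
      intro x. split; intros [t Ht]; subst x.
      * exists ((t - p1)/d1). simpl. apply pt_eq; field; auto.
      * exists (p1 + t*d1). simpl. apply pt_eq; ring.
  - intros S HS [i0 [Hi0 HnS]] [Htr [eps [Heps Hiso]]].
    assert (HS' : forall i, S i -> (i < n+5)%nat /\ i <> i0).
    { intros i Hi. split; [apply HS; auto|]. intros ->. contradiction. }
    set (dl := Rmin eps 1 / 16).
    assert (Hdl : 0 < dl) by (unfold dl; apply Rmin_case; lra).
    assert (Hdl1 : dl <= 1/16) by (unfold dl; pose proof (Rmin_r eps 1); lra).
    assert (Hdl2 : dl <= eps/16) by (unfold dl; pose proof (Rmin_l eps 1); lra).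
    clearbody dl.
    destruct i0 as [|[|i0]].
    +
      assert (Hs : same_line (0,0,0) (1,0,0) (0,-dl,0) (1,2*dl,0)).
      { apply Hiso.
        - unfold is_line, pzero. intro H. injection H; intros; lra.
        - simpl. replace (0-0) with 0 by ring. replace (0 - -dl) with dl by ring.
          rewrite Rabs_R0, Rabs_right by lra. repeat split; lra.
        - simpl. replace (1-1) with 0 by ring. replace (0-0) with 0 by ring.
          replace (0 - 2*dl) with (-(2*dl)) by ring.
          rewrite Rabs_R0, Rabs_Ropp, Rabs_right by lra. repeat split; lra.
        - intros i Hi. destruct (HS' i Hi) as [Hi1 Hi2]. destruct i as [|[|i]]; [lia| |].
          + exists (1,dl,0). split. { exists 1. simpl. apply pt_eq; ring. }
            change (conv_hull S2 (1,dl,0)). apply S2_mem; lra.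
          + apply hit_mid. lia. exists (1/2). simpl. apply pt_eq; field. }
      destruct (proj2 (Hs (0,-dl,0))) as [t Ht]. { exists 0. simpl. apply pt_eq; ring. }
      simpl in Ht. injection Ht as A1 A2 A3. lra.
    +
      assert (Hs : same_line (0,0,0) (1,0,0) (0,0,-dl) (1,0,2*dl)).
      { apply Hiso.
        - unfold is_line, pzero. intro H. injection H; intros; lra.
        - simpl. replace (0-0) with 0 by ring. replace (0 - -dl) with dl by ring.
          rewrite Rabs_R0, Rabs_right by lra. repeat split; lra.
        - simpl. replace (1-1) with 0 by ring. replace (0-0) with 0 by ring.
          replace (0 - 2*dl) with (-(2*dl)) by ring.
          rewrite Rabs_R0, Rabs_Ropp, Rabs_right by lra. repeat split; lra.
        - intros i Hi. destruct (HS' i Hi) as [Hi1 Hi2]. destruct i as [|[|i]]; [| lia |].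
          + exists (0,0,-dl). split. { exists 0. simpl. apply pt_eq; ring. }
            change (conv_hull S1 (0,0,-dl)). apply S1_mem; lra.
          + apply hit_mid. lia. exists (1/2). simpl. apply pt_eq; field. }
      destruct (proj2 (Hs (0,0,-dl))) as [t Ht]. { exists 0. simpl. apply pt_eq; ring. }
      simpl in Ht. injection Ht as A1 A2 A3. lra.
    + destruct i0 as [|[|[|k0]]].
      *
        apply (not_pins_V n S 2 (dl*0) (dl*1) eps); auto; try lra.
        { apply goodV_scale; auto. apply goodX; lia. }
        { rewrite Rmult_0_r, Rabs_R0; lra. }
        { rewrite Rmult_1_r, Rabs_right; lra. }
      * apply (not_pins_V n S 3 (dl*(-1)) (dl*(-1)) eps); auto; try lra.
        { apply goodV_scale; auto. apply goodY; lia. }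
        { rewrite Rabs_left; lra. }
        { rewrite Rabs_left; lra. }
      * apply (not_pins_V n S 4 (dl*1) (dl*0) eps); auto; try lra.
        { apply goodV_scale; auto. apply goodZ; lia. }
        { rewrite Rmult_1_r, Rabs_right; lra. }
        { rewrite Rmult_0_r, Rabs_R0; lra. }
      * set (K := 2^(Datatypes.S k0)).
        assert (HK : 2 <= K) by (unfold K; simpl; pose proof (pow2_ge1 k0); lra).
        set (nu := dl / K).
        assert (Hnu : 0 < nu) by (unfold nu; apply Rdiv_lt_0_compat; lra).
        assert (HnuK : nu * K = dl) by (unfold nu; field; lra).
        assert (Hnu2 : nu <= dl) by (nra).
        clearbody nu.
        apply (not_pins_V n S (5+k0) (nu*1) (nu*K) eps); auto; try lra.
        { apply goodV_scale; auto. apply goodC. lia. }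
        { rewrite Rmult_1_r, Rabs_right; lra. }
        { rewrite Rabs_right; lra. }
Qed.
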